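(* Let $q=4$ and let $k>0$ be an even integer, and put $e=3k$. Then the polynomial $$g=S_{k+1}^2+S_{2k}^{q^k+1}\in\mathbb{F}_2[x]$$ is a permutation polynomial of $\mathbb{F}_{q^e}=\mathbb{F}_{4^{3k}}$.
   Context: For a prime power $q$, $\mathbb{F}_q$ denotes the finite field with $q$ elements, and $p=\operatorname{char}\mathbb{F}_q$. For a positive integer $m$, $S_m=S_{m,q}=x+x^q+x^{q^2}+\cdots+x^{q^{m-1}}\in\mathbb{F}_p[x]$ (with $q$ fixed, written $S_m$). Powers such as $S_m^2$, $S_m^{q^k+1}$ denote powers of the polynomial $S_m$. A polynomial $f\in\mathbb{F}_Q[x]$ is a permutation polynomial (PP) of $\mathbb{F}_Q$ if the map $c\mapsto f(c)$ is a bijection of $\mathbb{F}_Q$. *)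

(* Defs.v *)
From HB Require Import structures.
From mathcomp Require Import all_boot all_order all_algebra all_field.
Set Implicit Arguments. Unset Strict Implicit. Unset Printing Implicit Defensive.
Import GRing.Theory.
Local Open Scope ring_scope.

(* S_{m,q} = x + x^q + ... + x^(q^(m-1)), a polynomial with 0/1 coefficients,
   viewed in R[x] (its image from F_p[x]). *)
Definition S_poly (R : nzRingType) (q m : nat) : {poly R} :=
  \sum_(i < m) 'X^(q ^ i).

Definition is_PP (F : finFieldType) (f : {poly F}) : Prop :=
  bijective (fun c : F => f.[c]).

(* Main.v *)
Require Import Defs.
From HB Require Import structures.
From mathcomp Require Import all_boot all_order all_algebra all_field.
From mathcomp Require Import ring zify.
From Stdlib Require Import Lia.
Set Implicit Arguments. Unset Strict Implicit. Unset Printing Implicit Defensive.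
Import GRing.Theory.
Local Open Scope ring_scope.

Definition ss (F : finFieldType) (m : nat) (c : F) : F := \sum_(i < m) c ^+ (4 ^ i).

Lemma pnat2 (F : finFieldType) n : 2%N \in [pchar F] -> [pchar F].-nat (2 ^ n)%N.
Proof. by move=> p2; rewrite pnatX pnatE // p2. Qed.

Lemma fD (F : finFieldType) n (a b : F) : 2%N \in [pchar F] ->
  (a + b) ^+ (2 ^ n) = a ^+ (2 ^ n) + b ^+ (2 ^ n).
Proof. by move=> p2; rewrite exprDn_pchar // pnat2. Qed.

Lemma fsum (F : finFieldType) n m (f : 'I_m -> F) : 2%N \in [pchar F] ->
  (\sum_(i < m) f i) ^+ (2 ^ n) = \sum_(i < m) (f i) ^+ (2 ^ n).
Proof.
move=> p2; elim: m f => [|m IH] f; first by rewrite !big_ord0 expr0n expn_eq0.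
by rewrite !big_ord_recr /= fD // IH.
Qed.

Lemma e4 i : (4 ^ i = 2 ^ (2 * i))%N.
Proof. by rewrite expnM. Qed.

Lemma ss_split (F : finFieldType) m n (c : F) : 2%N \in [pchar F] ->
  ss (m + n) c = ss m c + (ss n c) ^+ (4 ^ m).
Proof.
move=> p2; rewrite /ss big_split_ord /=; congr (_ + _).
rewrite [(4 ^ m)%N]e4 fsum //; apply: eq_bigr => i _.
by rewrite -exprM -e4 expnD mulnC.
Qed.

Lemma ssD (F : finFieldType) m (a b : F) : 2%N \in [pchar F] ->
  ss m (a + b) = ss m a + ss m b.
Proof.
move=> p2; rewrite /ss -big_split /=; apply: eq_bigr => i _.
by rewrite e4 fD.
Qed.

Lemma ss1 (F : finFieldType) (c : F) : ss 1 c = c.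
Proof. by rewrite /ss big_ord1 expn0 expr1. Qed.
Lemma core (F : finFieldType) (x x1 x2 y y1 y2 : F) : 2%:R = 0 :> F ->
  (y1 + x2)^+2 + (y2 + y)*(y1 + y2) + (y1 + x2 + x1)^+2 + (y2 + x + x2)^+2 =
  (y + x1)^+2 + (y1 + y2)*(y + y1) + (y + x1 + x)^+2 + (y1 + x2 + x1)^+2.
Proof.
move=> h2; apply/eqP; rewrite -subr_eq0; apply/eqP.
have -> : (y1 + x2)^+2 + (y2 + y)*(y1 + y2) + (y1 + x2 + x1)^+2 + (y2 + x + x2)^+2 -
  ((y + x1)^+2 + (y1 + y2)*(y + y1) + (y + x1 + x)^+2 + (y1 + x2 + x1)^+2) =
  2%:R * (x2*y1 + x2^+2 + y2^+2 - x1^+2 + x*y2 + x2*y2 + x*x2 - y^+2 - 2%:R*x1*y - x*y - x*x1).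
  by ring.
by rewrite h2 mul0r.
Qed.

Lemma fDn (F : finFieldType) n (a b : F) : 2%N \in [pchar F] ->
  (a + b) ^+ (4 ^ n) = a ^+ (4 ^ n) + b ^+ (4 ^ n).
Proof. by move=> p2; rewrite e4 fD. Qed.

Lemma hfix (F : finFieldType) k (x : F) : 2%N \in [pchar F] ->
  #|F| = (4 ^ (3 * k))%N ->
  let Q := (4 ^ k)%N in
  let gv := ss (k+1) x ^+ 2 + ss (2 * k) x ^+ (Q + 1) in
  (gv + ss (2 * k) x ^+ 8) ^+ Q = gv + ss (2 * k) x ^+ 8.
Proof.
move=> p2 hc Q gv.
have Q3 : forall z : F, z ^+ Q ^+ Q ^+ Q = z.
  move=> z; rewrite -!exprM -[RHS]expf_card hc; congr (_ ^+ _).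
  rewrite /Q -!expnD; f_equal; lia.
set y := ss k x.
have hA : ss (k+1) x = y + x ^+ Q by rewrite ss_split // ss1.
have hB : ss (2 * k) x = y + y ^+ Q by rewrite mul2n -addnn ss_split.
have hy4 : y ^+ 4 = y + x ^+ Q + x.
  have := ss_split 1 k x p2; rewrite addnC hA ss1 expn1 => e.
  apply: (addrI x); rewrite -e.
  by rewrite [RHS]addrC -addrA addrr_pchar2 // addr0.
have FQ : forall a b : F, (a + b) ^+ Q = a ^+ Q + b ^+ Q by move=> a b; rewrite fDn.
rewrite /gv hA hB.
set x1 := x ^+ Q. set x2 := x1 ^+ Q. set y1 := y ^+ Q. set y2 := y1 ^+ Q.
have hx : x2 ^+ Q = x by exact: Q3.
have hy : y2 ^+ Q = y by exact: Q3.
have e8 : (y + y1) ^+ 8 = (y + x1 + x) ^+ 2 + (y1 + x2 + x1) ^+ 2.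
  rewrite -[8%N]/(2 ^ 3)%N fD // -[(2 ^ 3)%N]/(4 * 2)%N !exprM.
  by rewrite /y1 (exprAC y Q 4) hy4 !FQ.
have eQ1 : (y + y1) ^+ (Q + 1) = (y1 + y2) * (y + y1) by rewrite addn1 exprSr FQ.
rewrite e8 eQ1 !addrA.
rewrite !FQ !(exprAC _ 2 Q) exprMn !FQ -/x1 -/x2 -/y1 -/y2 hx hy.
apply: core; exact: pcharf0 p2.
Qed.
Lemma Btr (F : finFieldType) k (x : F) : 2%N \in [pchar F] ->
  #|F| = (4 ^ (3 * k))%N ->
  let Q := (4 ^ k)%N in let b := ss (2 * k) x in
  b + b ^+ Q + b ^+ Q ^+ Q = 0.
Proof.
move=> p2 hc Q b.
have Q3 : forall z : F, z ^+ Q ^+ Q ^+ Q = z.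
  move=> z; rewrite -!exprM -[RHS]expf_card hc; congr (_ ^+ _).
  rewrite /Q -!expnD; f_equal; lia.
have FQ : forall a b : F, (a + b) ^+ Q = a ^+ Q + b ^+ Q by move=> a c; rewrite fDn.
have hB : b = ss k x + ss k x ^+ Q by rewrite /b mul2n -addnn ss_split.
rewrite hB !FQ Q3.
set y := ss k x. set y1 := y ^+ Q. set y2 := y1 ^+ Q.
have -> : y + y1 + (y1 + y2) + (y2 + y) = 2%:R * (y + y1 + y2) by ring.
by rewrite (pcharf0 p2) mul0r.
Qed.

Lemma fix_of_s0 (F : finFieldType) m (d : F) : 2%N \in [pchar F] ->
  ss m d = 0 -> d ^+ (4 ^ m) = d.
Proof.
move=> p2 H.
have e1 := ss_split m 1 d p2; have e2 := ss_split 1 m d p2.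
rewrite addnC in e2; rewrite e2 H ss1 expr0n /= addr0 add0r in e1.
by rewrite -e1.
Qed.

Lemma kills (F : finFieldType) k (d : F) : 2%N \in [pchar F] -> ~~ odd k ->
  ss (k + 1) d = 0 -> ss (2 * k) d = 0 -> d = 0.
Proof.
move=> p2 hk hA hB.
have h1 := fix_of_s0 p2 hA; have h2 := fix_of_s0 p2 hB.
have h16 : d ^+ 16 = d.
  have : d ^+ (4 ^ (k + 1) * 4 ^ (k + 1)) = d by rewrite exprM h1 h1.
  have -> : (4 ^ (k + 1) * 4 ^ (k + 1) = 4 ^ (2 * k) * 16)%N.
    by rewrite -!expnD -[16%N]/(4 ^ 2)%N -expnD; f_equal; lia.
  by rewrite exprM h2.
have kj : k = (k./2 * 2)%N.
  by rewrite -{1}(odd_double_half k) (negbTE hk) add0n muln2.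
have hk4 : d ^+ (4 ^ k) = d.
  rewrite kj; elim: (k./2) => [|j IH]; first by rewrite mul0n expn0 expr1.
  have -> : (4 ^ (j.+1 * 2) = 4 ^ (j * 2) * 16)%N.
    by rewrite -[16%N]/(4 ^ 2)%N -expnD; f_equal; lia.
  by rewrite exprM IH h16.
have h4 : d ^+ 4 = d by rewrite -{2}h1 expnD expn1 exprM hk4.
have hall : forall i, d ^+ (4 ^ i) = d.
  elim=> [|i IH]; first by rewrite expn0 expr1.
  by rewrite expnSr exprM IH h4.
move: hA; rewrite /ss (eq_bigr (fun _ => d)); last by move=> i _; rewrite hall.
rewrite sumr_const card_ord -mulr_natl natrD.
have -> : k%:R = 0 :> F by apply/eqP; rewrite -(dvdn_pcharf p2) dvdn2.
by rewrite add0r mul1r.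
Qed.
Unset Implicit Arguments.
Lemma hS (F : finFieldType) m (c : F) : (S_poly F 4 m).[c] = ss m c.
Proof. by rewrite /S_poly horner_sum; apply: eq_bigr => i _; rewrite hornerXn. Qed.

Theorem theorem2p1 (F : finFieldType) (k : nat) :
  (0 < k)%N -> ~~ odd k -> #|F| = (4 ^ (3 * k))%N ->
  is_PP ((S_poly F 4 k.+1) ^+ 2 + (S_poly F 4 (2 * k)) ^+ (4 ^ k + 1)).
Proof.
move=> k0 hk hc.
have p2 : 2%N \in [pchar F].
  apply: (@card_finPcharP _ 2 (2 * (3 * k))) => //.
  by rewrite hc -e4.
set Q := (4 ^ k)%N.
have FQ : forall a b : F, (a + b) ^+ Q = a ^+ Q + b ^+ Q by move=> a b; rewrite fDn.
rewrite /is_PP; apply: injF_bij => x x' /=.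
rewrite !hornerD !horner_exp !hS -addn1 => E.
set d := x + x'.
have hx' : x' = x + d by rewrite /d addrA addrr_pchar2 // add0r.
have hBd : ss (2 * k) x' = ss (2 * k) x + ss (2 * k) d by rewrite hx' ssD.
have hAd : ss (k + 1) x' = ss (k + 1) x + ss (k + 1) d by rewrite hx' ssD.
have f1 := hfix x p2 hc; have f2 := hfix x' p2 hc; rewrite /= -/Q in f1 f2.
set w := ss (2 * k) d ^+ 8.
have f8 : forall a b : F, (a + b) ^+ 8 = a ^+ 8 + b ^+ 8.
  by move=> a b; rewrite -[8%N]/(2 ^ 3)%N fD.
have ew : (ss (k + 1) x ^+ 2 + ss (2 * k) x ^+ (Q + 1) + ss (2 * k) x ^+ 8) +
          (ss (k + 1) x' ^+ 2 + ss (2 * k) x' ^+ (Q + 1) + ss (2 * k) x' ^+ 8) = w.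
  rewrite -E hBd f8 /w.
  set u := _ + _ ^+ (Q + 1).
  by rewrite addrACA addrr_pchar2 // add0r addrA addrr_pchar2 // add0r.
have wQ : w ^+ Q = w by rewrite -ew FQ f1 f2.
have wtr : w + w ^+ Q + w ^+ Q ^+ Q = 0.
  have := Btr d p2 hc; rewrite /= -/Q => H.
  have := congr1 (fun z => z ^+ 8) H; rewrite /= !f8 expr0n /= mulr0n => <-.
  by rewrite /w !(exprAC _ 8 Q).
rewrite !wQ addrr_pchar2 // add0r in wtr.
have Bd0 : ss (2 * k) d = 0.
  have : w == 0 by rewrite wtr.
  by rewrite /w expf_eq0 => /eqP.
rewrite hBd Bd0 addr0 hAd in E.
have Ad0 : ss (k + 1) d = 0.
  move: E; rewrite -[2%N]/(2 ^ 1)%N fD //.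
  set a := _ ^+ (2 ^ 1); set c := _ ^+ (Q + 1); set e := _ ^+ (2 ^ 1) => H.
  have He : e = (a + e + c) - (a + c) by ring.
  rewrite -H subrr in He.
  by move/eqP: He; rewrite /e expf_eq0 => /eqP.
have d0 := kills p2 hk Ad0 Bd0.
by rewrite hx' d0 addr0.
Qed.
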